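(* Let $T$ and $T'$ be finite rooted trees, each regarded as a directed graph with all edges directed away from the root. If $X_T(\mathbf x;q)=X_{T'}(\mathbf x;q)$, then $T$ and $T'$ are isomorphic as rooted trees.
   Context: For a directed graph $G$ on vertex set $[n]$, a coloring $\kappa:[n]\to\mathbb Z_{>0}$ is proper if adjacent vertices receive different colors; $\mathrm{asc}(\kappa)$ is the number of directed edges $(i,j)$ with $\kappa(i)<\kappa(j)$; the chromatic quasisymmetric function is $X_G(\mathbf x;q)=\sum_{\kappa\text{ proper}}x_{\kappa(1)}\cdots x_{\kappa(n)}q^{\mathrm{asc}(\kappa)}$. *)

(* Defs.v *)
From mathcomp Require Import all_boot.
Set Implicit Arguments. Unset Strict Implicit. Unset Printing Implicit Defensive.

(* A finite rooted tree on vertex set 'I_n, given by its root r and a parent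
   map par (with the convention par r = r); every vertex reaches the root by
   iterating par. *)
Definition rooted_tree (n : nat) (r : 'I_n) (par : 'I_n -> 'I_n) : Prop :=
  par r = r /\ forall v : 'I_n, exists k : nat, iter k par v = r.

Definition tree_edge (n : nat) (r : 'I_n) (par : 'I_n -> 'I_n) : rel 'I_n :=
  fun u v => (v != r) && (par v == u).

(* Colorings with colors in {1..k}, encoded as 'I_k (color c+1 <-> c). *)
Definition proper_col (n k : nat) (e : rel 'I_n) (kap : {ffun 'I_n -> 'I_k}) : bool :=
  [forall u, forall v, e u v ==> (kap u != kap v)].

Definition asc (n k : nat) (e : rel 'I_n) (kap : {ffun 'I_n -> 'I_k}) : nat :=
  #|[set uv : 'I_n * 'I_n | e uv.1 uv.2 && (kap uv.1 < kap uv.2)]|.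

(* Coefficient of x_1^{alpha 1} ... x_k^{alpha k} q^a in X_G(x;q). *)
Definition csf_coeff (n : nat) (e : rel 'I_n) (k : nat) (alpha : 'I_k -> nat)
    (a : nat) : nat :=
  #|[set kap : {ffun 'I_n -> 'I_k} | [&& proper_col e kap,
       [forall c, #|[set v | kap v == c]| == alpha c] & asc e kap == a]]|.

(* X_G = X_G' as formal power series: all coefficients agree. *)
Definition csf_eq (n m : nat) (e : rel 'I_n) (e' : rel 'I_m) : Prop :=
  forall (k : nat) (alpha : 'I_k -> nat) (a : nat),
    csf_coeff e alpha a = csf_coeff e' alpha a.

Definition rooted_iso (n m : nat) (r : 'I_n) (par : 'I_n -> 'I_n)
    (r' : 'I_m) (par' : 'I_m -> 'I_m) : Prop :=
  exists f : 'I_n -> 'I_m, [/\ bijective f, f r = r' &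
    forall u v, tree_edge r par u v = tree_edge r' par' (f u) (f v)].

(* Main.v *)
Require Import Defs.
From HB Require Import structures.
From mathcomp Require Import all_boot all_algebra zify.
Set Implicit Arguments. Unset Strict Implicit. Unset Printing Implicit Defensive.

Fixpoint FT (m : nat) : fieldType := match m with 0 => rat | S k => {fraction {poly FT k}} end.
Section Desc.
Variables (n : nat) (r : 'I_n) (par : 'I_n -> 'I_n).
Hypothesis Hr : par r = r.
Hypothesis Hreach : forall v, fconnect par v r.

Definition desc v := [set u | fconnect par u v].
Definition ch v := [set w | (w != r) && (par w == v)].

Lemma desc_refl v : v \in desc v.
Proof. by rewrite inE connect0. Qed.

Lemma desc_par u v : u \in desc v -> u != v -> par u \in desc v.
Proof. by rewrite !inE fconnect_eqVf => /orP[/eqP->|//]; rewrite eqxx. Qed.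

Lemma desc_trans u w v : u \in desc w -> w \in desc v -> u \in desc v.
Proof. rewrite !inE; exact: connect_trans. Qed.

Lemma fconnectP x y : reflect (exists k, iter k par x = y) (fconnect par x y).
Proof.
apply: (iffP idP) => [/iter_findex H|[k <-]]; first by exists (findex par x y).
exact: fconnect_iter.
Qed.

Lemma iter_r k : iter k par r = r.
Proof. exact: iter_fix. Qed.

Lemma par_notin u : u != r -> par u \notin desc u.
Proof.
move=> ur; apply/negP; rewrite inE => /fconnectP [a Ha].
have Hc : forall j, iter (j * a.+1) par u = u.
  by elim=> [|j IH] //; rewrite mulSn iterD IH iterSr Ha.
have /fconnectP [b Hb] := Hreach u.
have := Hc b; rewrite mulnSr iterD Hb iter_r => E.
by move: ur; rewrite E eqxx.
Qed.

Lemma r_desc v : r \in desc v -> v = r.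
Proof. by rewrite inE => /fconnectP [k <-]; rewrite iter_r. Qed.

Lemma desc_r u : u \in desc r.
Proof. by rewrite inE. Qed.

Lemma ch_par w v : w \in ch v -> par w = v.
Proof. by rewrite inE => /andP[_ /eqP]. Qed.

Lemma ch_neq_r w v : w \in ch v -> w != r.
Proof. by rewrite inE => /andP[]. Qed.

Lemma v_notin_ch_desc w v : w \in ch v -> v \notin desc w.
Proof. move=> wc; rewrite -(ch_par wc); exact: par_notin (ch_neq_r wc). Qed.

Lemma ch_desc_sub w v u : w \in ch v -> u \in desc w -> u \in desc v :\ v.
Proof.
move=> wc uw; rewrite !inE; apply/andP; split.
  apply/negP => /eqP E; subst u; by rewrite (negbTE (v_notin_ch_desc wc)) in uw.
move: uw; rewrite inE => uw; apply: connect_trans uw _.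
by rewrite -(ch_par wc) fconnect1.
Qed.

Lemma desc_split u v : u \in desc v -> u != v -> exists2 w, w \in ch v & u \in desc w.
Proof.
rewrite inE => /iter_findex; move: (findex _ _ _) => k.
elim: k u => [|k IH] u; first by move=> /= ->; rewrite eqxx.
move=> Hk uv.
case: (boolP (par u == v)) => [/eqP pu|pu].
  exists u; last exact: desc_refl.
  rewrite inE pu eqxx andbT; apply/negP => /eqP ur.
  by move: uv; rewrite -pu ur Hr eqxx.
rewrite iterSr in Hk; have [w wc pw] := IH (par u) Hk pu.
exists w => //; rewrite inE (fconnect_eqVf par u w).
by rewrite inE in pw; rewrite pw orbT.
Qed.

Lemma ch_disj w1 w2 v u : w1 \in ch v -> w2 \in ch v ->
  u \in desc w1 -> u \in desc w2 -> w1 = w2.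
Proof.
move=> c1 c2; rewrite !inE => /fconnectP[a Ha] /fconnectP[b Hb].
wlog ab : a b w1 w2 c1 c2 Ha Hb / (a <= b)%N.
  move=> H; case: (leqP a b) => [|/ltnW] ab; first exact: (H a b).
  by symmetry; apply: (H b a).
move: Hb; rewrite -(subnK ab) iterD Ha.
case E: (b - a) => [//|d]; rewrite iterSr (ch_par c1) => Hd.
have : par w2 \in desc w2.
  rewrite (ch_par c2) inE; apply/fconnectP; by exists d.
by move=> /negP; case; apply/negP/par_notin/(ch_neq_r c2).
Qed.

Lemma card_ch_lt w v : w \in ch v -> #|desc w| < #|desc v|.
Proof.
move=> wc; apply: proper_card; rewrite properE; apply/andP; split.
  apply/subsetP => u /(ch_desc_sub wc); rewrite inE => /andP[].
  by [].
apply/subsetPn; exists v; first exact: desc_refl.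
exact: v_notin_ch_desc.
Qed.



End Desc.

Import GRing.Theory.
Local Open Scope ring_scope.

Definition iota m (a : FT m) : FT m.+1 := tofrac (a%:P).
Definition gen m : FT m.+1 := tofrac ('X : {poly FT m}).
Arguments gen : clear implicits.

Lemma iota_is_zmod m : zmod_morphism (@iota m).
Proof. by move=> a b; rewrite /iota polyCB rmorphB. Qed.
Lemma iota_is_monoid m : monoid_morphism (@iota m).
Proof. by split=> [|a b]; rewrite /iota ?polyC1 ?rmorph1 // polyCM rmorphM. Qed.
HB.instance Definition _ m := GRing.isZmodMorphism.Build _ _ (@iota m) (@iota_is_zmod m).
HB.instance Definition _ m := GRing.isMonoidMorphism.Build _ _ (@iota m) (@iota_is_monoid m).

Fixpoint Xv (m : nat) : 'I_m.+1 -> FT m :=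
  match m return 'I_m.+1 -> FT m with
  | 0 => fun _ => 1
  | k.+1 => fun (j : 'I_k.+2) => if val j == k.+1 then gen k else iota (Xv (inord (val j) : 'I_k.+1))
  end.

Lemma Xv0 m : Xv (ord0 : 'I_m.+1) = 1.
Proof.
elim: m => [|m IH] //=.
have -> : (inord 0 : 'I_m.+1) = ord0 by apply: val_inj; rewrite /= inordK.
by rewrite IH rmorph1.
Qed.

Lemma Xv_widen m (j : 'I_m.+1) : Xv (widen_ord (leqnSn _) j : 'I_m.+2) = iota (Xv j).
Proof.
rewrite /= ifN; last by rewrite neq_ltn ltn_ord.
by rewrite inord_val.
Qed.

Lemma Xv_max m : Xv (ord_max : 'I_m.+2) = gen m.
Proof. by rewrite /= eqxx. Qed.


Definition lin (F : fieldType) (a b : F) : {poly F} := a%:P + 'X * b%:P.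

Lemma iota_gen m (a b : FT m) : iota a + gen m * iota b = tofrac (lin a b).
Proof. by rewrite /lin rmorphD rmorphM. Qed.

Lemma lin_neq0 (F : fieldType) (a b : F) : b != 0 -> lin a b != 0.
Proof.
move=> b0; apply/eqP => /(congr1 (fun p : {poly F} => p`_1)).
by rewrite /lin coefD coefC coefXM /= coefC /= add0r coef0 => E; move: b0; rewrite E eqxx.
Qed.

Lemma lin_XsubC (F : fieldType) (a b : F) : b != 0 ->
  lin a b = b%:P * ('X - (- (a / b))%:P).
Proof.
move=> b0; rewrite /lin polyCN opprK mulrDr -polyCM [b * _]mulrC divfK //.
by rewrite addrC [b%:P * _]mulrC.
Qed.

Lemma lin_perm (F : fieldType) (s t : seq (F * F)) :
  all (fun p => p.2 != 0) s -> all (fun p => p.2 != 0) t ->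
  \prod_(p <- s) lin p.1 p.2 = \prod_(p <- t) lin p.1 p.2 ->
  perm_eq [seq - (p.1 / p.2) | p <- s] [seq - (p.1 / p.2) | p <- t].
Proof.
have E (u : seq (F * F)) : all (fun p => p.2 != 0) u ->
    \prod_(p <- u) lin p.1 p.2 = (\prod_(p <- u) p.2)%:P *
        \prod_(x <- [seq - (p.1 / p.2) | p <- u]) ('X - x%:P).
  move=> /allP H; rewrite big_map rmorph_prod -big_split /=.
  by apply: eq_big_seq => p pu; rewrite lin_XsubC // H.
have nz (u : seq (F * F)) : all (fun p => p.2 != 0) u -> \prod_(p <- u) p.2 != 0.
  move=> /allP H; rewrite prodf_seq_neq0; apply/allP => p pu /=; exact: H.
move=> hs ht; rewrite (E s hs) (E t ht) => Est.
have Lc := congr1 lead_coef Est.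
rewrite !lead_coef_Mmonic ?monic_prod_XsubC // !lead_coefC in Lc.
rewrite Lc in Est; apply: prod_XsubC_eq; apply: (mulfI _ Est).
by rewrite polyC_eq0 -Lc nz.
Qed.

Section Tree.
Variables (n : nat) (r : 'I_n) (par : 'I_n -> 'I_n).
Hypothesis Hr : par r = r.
Hypothesis Hreach : forall v, fconnect par v r.

Definition mono m (k : {ffun 'I_n -> 'I_m.+1}) : FT m := \prod_u Xv (k u).

Definition good m (S : {set 'I_n}) (k : {ffun 'I_n -> 'I_m.+1}) : bool :=
  [forall u, (k u != ord0) == (u \in S)] &&
  [forall u, [&& u \in S, u != r & par u \in S] ==> (k u < k (par u))%N].

Definition Phi m (S : {set 'I_n}) : FT m := \sum_(k | good S k) mono k.

Lemma goodP m (S : {set 'I_n}) (k : {ffun 'I_n -> 'I_m.+1}) :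
  reflect ((forall u, (k u != ord0) = (u \in S)) /\
           (forall u, u \in S -> u != r -> par u \in S -> (k u < k (par u))%N))
          (good S k).
Proof.
apply: (iffP andP) => [[/forallP H1 /forallP H2]|[H1 H2]]; split.
- by move=> u; have /eqP := H1 u.
- by move=> u uS ur pS; have := H2 u; rewrite uS ur pS.
- by apply/forallP => u; rewrite H1.
- by apply/forallP => u; apply/implyP => /and3P[uS ur pS]; apply: H2.
Qed.

Lemma good0 m (S : {set 'I_n}) (k : {ffun 'I_n -> 'I_m.+1}) u :
  good S k -> u \notin S -> k u = ord0.
Proof. by move=> /goodP[H1 _] uS; apply/eqP; rewrite -[_ == _]negbK H1. Qed.

Definition restr m (S : {set 'I_n}) (k : {ffun 'I_n -> 'I_m.+1}) :=
  [ffun u => if u \in S then k u else ord0].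

Lemma good_restr m (S1 S2 : {set 'I_n}) (k : {ffun 'I_n -> 'I_m.+1}) :
  good (S1 :|: S2) k -> good S1 (restr S1 k).
Proof.
move=> /goodP[H1 H2]; apply/goodP; split.
  by move=> u; rewrite ffunE; case: ifP => uS; [rewrite H1 inE uS | rewrite eqxx].
move=> u uS ur pS; rewrite !ffunE uS pS; apply: H2 => //; by rewrite inE ?uS ?pS.
Qed.

Section Union.
Variables (S1 S2 : {set 'I_n}).
Hypothesis dis : [disjoint S1 & S2].
Hypothesis e12 : forall u, u != r -> u \in S1 -> par u \notin S2.
Hypothesis e21 : forall u, u != r -> u \in S2 -> par u \notin S1.

Lemma d1 u : u \in S1 -> u \notin S2.
Proof. by move=> uS; rewrite (disjointFr dis uS). Qed.
Lemma d2 u : u \in S2 -> u \notin S1.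
Proof. by move=> uS; rewrite (disjointFl dis uS). Qed.

Definition merge m (p : {ffun 'I_n -> 'I_m.+1} * {ffun 'I_n -> 'I_m.+1}) :=
  [ffun u => if u \in S1 then p.1 u else p.2 u].
Definition splt m (k : {ffun 'I_n -> 'I_m.+1}) := (restr S1 k, restr S2 k).

Lemma good_merge m (k1 k2 : {ffun 'I_n -> 'I_m.+1}) :
  good S1 k1 -> good S2 k2 ->
  good (S1 :|: S2) (merge (k1, k2)) /\ splt (merge (k1, k2)) = (k1, k2).
Proof.
move=> g1 g2; have /goodP [H1 H2] := g1; have /goodP [K1 K2] := g2.
split.
  apply/goodP; split.
    move=> u; rewrite ffunE inE /=; case: ifP => uS; first by rewrite H1 uS.
    by rewrite K1.
  move=> u; rewrite !inE !ffunE /= => /orP[uS|uS] ur pS.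
    have pS1 : par u \in S1 by move: pS; rewrite (negbTE (e12 ur uS)) orbF.
    by rewrite uS pS1; apply: H2.
  have pS2 : par u \in S2 by move: pS; rewrite (negbTE (e21 ur uS)).
  by rewrite (negbTE (d2 uS)) (negbTE (d2 pS2)); apply: K2.
congr pair; apply/ffunP => u; rewrite !ffunE /=.
  case: ifP => uS; first by rewrite uS.
  by rewrite (good0 g1) // uS.
case: ifP => uS; first by rewrite (negbTE (d2 uS)).
by rewrite (good0 g2) // uS.
Qed.

Lemma mono_merge m (k1 k2 : {ffun 'I_n -> 'I_m.+1}) :
  good S1 k1 -> good S2 k2 -> mono (merge (k1, k2)) = mono k1 * mono k2.
Proof.
move=> g1 g2; rewrite /mono -big_split /=; apply: eq_bigr => u _.
rewrite ffunE /=; case: ifP => uS.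
  by rewrite (good0 g2 (d1 uS)) Xv0 mulr1.
by rewrite (good0 g1) ?uS // Xv0 mul1r.
Qed.

Lemma Phi_union m : Phi m (S1 :|: S2) = Phi m S1 * Phi m S2.
Proof.
rewrite /Phi big_distrlr /= pair_big_dep /=.
rewrite (reindex_onto (@merge m) (@splt m)); last first.
  move=> k g; apply/ffunP => u; rewrite !ffunE.
  case: (boolP (u \in S1)) => u1 //; case: (boolP (u \in S2)) => u2 //.
  by rewrite (good0 g) // inE negb_or u1 u2.
have key (p : {ffun 'I_n -> 'I_m.+1} * {ffun 'I_n -> 'I_m.+1}) :
    good (S1 :|: S2) (merge p) && (splt (merge p) == p) = good S1 p.1 && good S2 p.2.
  case: p => k1 k2 /=; apply/idP/idP.
    move=> /andP[g /eqP E]; case: E => E1 E2.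
    have g1 := good_restr g; rewrite E1 in g1; rewrite g1 /=.
    rewrite setUC in g; have g2 := good_restr g; by rewrite E2 in g2.
  by move=> /andP[g1 g2]; have [-> ->] := good_merge g1 g2; rewrite eqxx.
apply: eq_big => [p|p]; first exact: key.
by rewrite key => /andP[g1 g2]; case: p g1 g2 => k1 k2 /= g1 g2; rewrite mono_merge.
Qed.

End Union.

Let cdisj := ch_disj Hr Hreach.
Let cdsub := ch_desc_sub Hr Hreach.
Let vnot := v_notin_ch_desc Hr Hreach.
Let pnot := par_notin Hr Hreach.
Let clt := card_ch_lt Hr Hreach.
Let dsplit := desc_split Hr.

Local Notation D := (desc par).
Local Notation C := (ch r par).

Definition W m v : FT m := Phi m (D v).
Definition P m v : FT m := Phi m (D v :\ v).

Lemma Phi_set0 m : Phi m set0 = 1.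
Proof.
rewrite /Phi (big_pred1 [ffun=> ord0]); first by rewrite /mono (eq_bigr (fun=> 1)) ?big1 // => u _; rewrite ffunE Xv0.
move=> k; apply/idP/eqP => [g|->].
  by apply/ffunP => u; rewrite ffunE (good0 g) ?inE.
by apply/goodP; split=> u; rewrite ?ffunE ?eqxx ?inE.
Qed.

Lemma Phi_bigcup m v (s : seq 'I_n) : uniq s -> {subset s <= C v} ->
  Phi m (\bigcup_(w <- s) D w) = \prod_(w <- s) W m w.
Proof.
elim: s => [|w s IH] /=; first by rewrite !big_nil Phi_set0.
move=> /andP[ws us] sub; rewrite !big_cons -IH //; last by move=> x xs; apply: sub; rewrite inE xs orbT.
have wc : w \in C v by apply: sub; rewrite inE eqxx.
have memS u : u \in \bigcup_(w <- s) D w -> exists2 w', w' \in s & u \in D w'.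
  by rewrite bigcup_seq => /bigcupP.
have neqw w' : w' \in s -> w' <> w by move=> w's E; move: ws; rewrite -E w's.
apply: Phi_union.
- apply/pred0P => u /=; apply/negP => /andP[u1 /memS[w' w's u2]].
  apply: (neqw w' w's); apply: (cdisj (sub w' _) wc u2 u1); by rewrite inE w's orbT.
- move=> u ur u1; apply/negP => /memS[w' w's u2].
  have w'c : w' \in C v by apply: sub; rewrite inE w's orbT.
  case: (eqVneq u w) => [E|uw].
    move: u2; rewrite E (ch_par wc) => u2.
    by move: (vnot w'c); rewrite u2.
  apply: (neqw w' w's); exact: (cdisj w'c wc u2 (desc_par u1 uw)).
- move=> u ur /memS[w' w's u2]; apply/negP => u1.
  have w'c : w' \in C v by apply: sub; rewrite inE w's orbT.
  case: (eqVneq u w') => [E|uw].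
    move: u1; rewrite E (ch_par w'c) => u1.
    by move: (vnot wc); rewrite u1.
  apply: (neqw w' w's); exact: (cdisj w'c wc (desc_par u2 uw) u1).
Qed.

Lemma P_prod m v : P m v = \prod_(w in C v) W m w.
Proof.
rewrite /P -big_enum -(@Phi_bigcup m v) ?enum_uniq //; last by move=> w; rewrite mem_enum.
congr Phi; rewrite big_enum; apply/setP => u; apply/idP/bigcupP.
  by move=> /setD1P[uv uD]; apply: dsplit.
by move=> [w wc uw]; apply: cdsub wc uw.
Qed.



Lemma path_le m v (k : {ffun 'I_n -> 'I_m.+1}) u :
  good (D v) k -> u \in D v -> (k u <= k v)%N.
Proof.
move=> /goodP[_ H2]; rewrite inE => /iter_findex; move: (findex _ _ _) => j.
elim: j u => [|j IH] u; first by move=> /= ->.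
move=> Hj; have uD : u \in D v by rewrite inE; apply/fconnectP; exists j.+1.
rewrite iterSr in Hj.
have pD : par u \in D v by rewrite inE; apply/fconnectP; exists j.
case: (eqVneq u r) => [E|ur].
  by move: Hj; rewrite E Hr iter_fix // => ->.
exact: ltnW (leq_trans (H2 u uD ur pD) (IH _ Hj)).
Qed.

Lemma path_lt m v (k : {ffun 'I_n -> 'I_m.+1}) u :
  good (D v) k -> u \in D v -> u != v -> (k u < k v)%N.
Proof.
move=> g uD uv; have /goodP[_ H2] := g.
case: (eqVneq u r) => [E|ur].
  by move: uD uv; rewrite E => /(r_desc Hr) ->; rewrite eqxx.
have pD := desc_par uD uv.
exact: leq_trans (H2 u uD ur pD) (path_le g pD).
Qed.

Lemma eq_ord0 p (x : 'I_p.+1) : (x == ord0) = (val x == 0%N).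
Proof. by rewrite -val_eqE. Qed.

Lemma W_rec m v : W m.+1 v = iota (W m v) + gen m * iota (P m v).
Proof.
have vD : v \in D v := desc_refl par v.
pose wid (k : {ffun 'I_n -> 'I_m.+1}) : {ffun 'I_n -> 'I_m.+2} :=
  [ffun u => widen_ord (leqnSn _) (k u)].
pose nar (k : {ffun 'I_n -> 'I_m.+2}) : {ffun 'I_n -> 'I_m.+1} :=
  [ffun u => inord (k u)].
pose ext (k : {ffun 'I_n -> 'I_m.+1}) : {ffun 'I_n -> 'I_m.+2} :=
  [ffun u => if u == v then ord_max else widen_ord (leqnSn _) (k u)].
pose nar2 (k : {ffun 'I_n -> 'I_m.+2}) : {ffun 'I_n -> 'I_m.+1} :=
  [ffun u => if u == v then ord0 else inord (k u)].
rewrite /W /P /Phi (bigID (fun k : {ffun 'I_n -> 'I_m.+2} => k v == ord_max)) /= addrC.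
congr (_ + _).
  rewrite rmorph_sum (reindex_onto wid nar); last first.
    move=> k /andP[g kv]; apply/ffunP => u; rewrite !ffunE; apply: val_inj => /=.
    rewrite inordK // ltnS.
    have kvm : (k v <= m)%N.
      by move: kv; rewrite -val_eqE /= => kv; move: (ltn_ord (k v)); rewrite ltnS leq_eqVlt (negbTE kv).
    case: (boolP (u \in D v)) => uD; first exact: leq_trans (path_le g uD) kvm.
    by rewrite (good0 g uD).
  apply: eq_big => [j|j _]; last first.
    rewrite /mono rmorph_prod; apply: eq_bigr => u _; by rewrite ffunE Xv_widen.
  have -> : nar (wid j) = j by apply/ffunP => u; rewrite !ffunE; apply: val_inj; rewrite /= inordK.
  rewrite eqxx andbT.
  have -> : (wid j v == ord_max) = false by rewrite ffunE -val_eqE /= ltn_eqF.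
  by rewrite andbT /good; congr andb; apply: eq_forallb => u; rewrite !ffunE //.
rewrite rmorph_sum mulr_sumr (reindex_onto ext nar2); last first.
  move=> k /andP[g /eqP kv]; apply/ffunP => u; rewrite !ffunE.
  case: (eqVneq u v) => [->|uv]; first by rewrite kv.
  apply: val_inj => /=; rewrite inordK // ltnS.
  case: (boolP (u \in D v)) => uD; last by rewrite (good0 g uD).
  by have := path_lt g uD uv; rewrite kv /= ltnS.
have extv j : ext j v = ord_max by rewrite ffunE eqxx.
have extu j u : u != v -> ext j u = widen_ord (leqnSn _) (j u) by move=> uv; rewrite ffunE (negbTE uv).
apply: eq_big => [j|j]; last first.
  move=> /andP[/andP[_ _] /eqP E].
  have jv : j v = ord0 by rewrite -E ffunE eqxx.
  rewrite /mono rmorph_prod (bigD1 v) // [X in _ = _ * X](bigD1 v) // extv Xv_max jv Xv0 rmorph1 Monoid.mul1m.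
  congr (_ * _); apply: eq_bigr => u uv; by rewrite extu // Xv_widen.
apply/idP/idP.
  move=> /andP[/andP[g _] /eqP E].
  have jv : j v = ord0 by rewrite -E ffunE eqxx.
  have /goodP[H1 H2] := g; apply/goodP; split.
    move=> u; case: (eqVneq u v) => [->|uv]; first by rewrite jv eqxx in_setD1 eqxx.
    by rewrite in_setD1 uv /= -H1 extu // !eq_ord0.
  move=> u; rewrite !in_setD1 => /andP[uv uD] ur /andP[pv pD].
  by have := H2 u uD ur pD; rewrite !extu.
move=> g; have /goodP[H1 H2] := g.
have jv : j v = ord0 by rewrite (good0 g) // in_setD1 eqxx.
rewrite extv eqxx andbT; apply/andP; split; last first.
  apply/eqP/ffunP => u; rewrite !ffunE; case: (eqVneq u v) => [->|uv] //.
  by apply: val_inj; rewrite /= inordK.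
apply/goodP; split.
  move=> u; case: (eqVneq u v) => [->|uv]; first by rewrite extv vD.
  by rewrite extu // eq_ord0 /= -eq_ord0 H1 in_setD1 uv.
move=> u uD ur pD.
case: (eqVneq u v) => [E|uv].
  by rewrite E in pD ur; move: (pnot ur); rewrite pD.
case: (eqVneq (par u) v) => [pv|pv].
  by rewrite pv extv extu //=.
by rewrite !extu //=; apply: H2; rewrite // in_setD1 ?uv ?pv.
Qed.

Lemma W_lin m v : W m.+1 v = tofrac (lin (W m v) (P m v)).
Proof. by rewrite W_rec iota_gen. Qed.

Lemma W_neq0 m v : (#|D v| <= m)%N -> W m v != 0.
Proof.
elim: m v => [|m IH] v.
  by rewrite leqn0 => /eqP/cards0_eq/setP/(_ v); rewrite desc_refl inE.
move=> Hv; rewrite W_lin tofrac_eq0; apply: lin_neq0; rewrite P_prod; apply/prodf_neq0 => w wc.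
by apply: IH; rewrite -ltnS; apply: leq_trans (clt wc) Hv.
Qed.

Lemma P_neq0 m v : (#|D v| <= m.+1)%N -> P m v != 0.
Proof.
move=> Hv; rewrite P_prod; apply/prodf_neq0 => w wc.
by apply: W_neq0; rewrite -ltnS; apply: leq_trans (clt wc) Hv.
Qed.
End Tree.

Lemma perm_cons_case (V : eqType) (x y : V) (A B : seq V) :
  perm_eq (x :: A) (y :: B) -> (x = y /\ perm_eq A B) \/ (x \in B /\ y \in A).
Proof.
move=> pe; case: (eqVneq x y) => [exy|nxy].
  by left; split=> //; rewrite exy perm_cons in pe.
right; split.
  by have := perm_mem pe x; rewrite !inE eqxx (negbTE nxy) /= => <-.
by have := perm_mem pe y; rewrite !inE eqxx eq_sym (negbTE nxy) /= => ->.
Qed.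

Lemma ratio_eq (F : fieldType) (a b c d : F) : b != 0 -> d != 0 ->
  - (a / b) = - (c / d) -> a * d = c * b.
Proof.
move=> b0 d0 /oppr_inj E.
by rewrite -(divfK b0 a) E mulrAC divfK.
Qed.

Lemma match_perm (A B V : eqType) (f : A -> V) (g : B -> V) (b0 : B)
    (s : seq A) (t : seq B) :
  uniq s -> uniq t -> perm_eq (map f s) (map g t) ->
  exists h : A -> B, [/\ forall x, x \in s -> h x \in t,
                         forall x, x \in s -> f x = g (h x),
                         {in s &, injective h} &
                         forall y, y \in t -> exists2 x, x \in s & h x = y].
Proof.
elim: s t => [|x s IH] t /= us ut pe.
  exists (fun=> b0); split=> // y yt.
  by move: (perm_size pe); rewrite size_map /=; case: t ut yt {pe}.
case/andP: us => xs us.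
have : f x \in map g t by rewrite -(perm_mem pe) mem_head.
case/mapP => y yt fxy.
have pe' : perm_eq (map f s) (map g (rem y t)).
  have := perm_to_rem yt => /(perm_map g) /= pt.
  by rewrite -(perm_cons (f x)); apply: perm_trans pe _; rewrite fxy.
have [h' [h1 h2 h3 h4]] := IH _ us (rem_uniq y ut) pe'.
exists (fun z => if z == x then y else h' z); split.
- move=> z; rewrite inE; case: eqP => [_ _ //|_ /= zs].
  exact: mem_rem (h1 z zs).
- move=> z; rewrite inE; case: eqP => [-> _ //|_ /= zs].
  exact: h2.
- move=> z1 z2; rewrite !inE.
  have nz z : z \in s -> (z == x) = false.
    by move=> zs; apply/negbTE/eqP => E; move: xs; rewrite -E zs.
  case/predU1P => [->|z1s]; case/predU1P => [->|z2s] //; rewrite ?eqxx ?nz //.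
  + move=> E; move: (h1 z2 z2s); rewrite -E (mem_rem_uniq _ ut) inE eqxx //.
  + move=> E1; move: (h1 z1 z1s); rewrite E1 (mem_rem_uniq _ ut) inE eqxx //.
  + exact: h3.
- move=> y' y't; case: (eqVneq y' y) => [->|y'y].
    by exists x; rewrite ?mem_head ?eqxx.
  have : y' \in rem y t by rewrite (mem_rem_uniq _ ut) inE y'y.
  case/h4 => z zs hz; exists z; first by rewrite inE zs orbT.
  by have -> : (z == x) = false by apply/negbTE/eqP => E; move: xs; rewrite -E zs.
Qed.

Record rtr := RT { tn : nat; tr : 'I_tn; tp : 'I_tn -> 'I_tn;
  tHr : tp tr = tr; tHreach : forall v, fconnect tp v tr }.
Arguments tr : clear implicits. Arguments tp : clear implicits.
Arguments tHr : clear implicits. Arguments tHreach : clear implicits.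

Notation DD T v := (desc (tp T) v).
Notation CC T v := (ch (tr T) (tp T) v).
Notation WW T m v := (W (tr T) (tp T) m v).
Notation PP T m v := (P (tr T) (tp T) m v).

Definition isoP (T1 T2 : rtr) (v1 : 'I_(tn T1)) (v2 : 'I_(tn T2)) (f : 'I_(tn T1) -> 'I_(tn T2)) :=
  [/\ f v1 = v2, {in (DD T1 v1) &, injective f}, f @: DD T1 v1 = DD T2 v2 &
      {in (DD T1 v1), forall u, u != v1 -> f (tp T1 u) = tp T2 (f u)}].

Definition Iso T1 T2 v1 v2 := exists f, @isoP T1 T2 v1 v2 f.
Arguments Iso : clear implicits.

Lemma Iso_card T1 T2 v1 v2 : Iso T1 T2 v1 v2 -> #|DD T1 v1| = #|DD T2 v2|.
Proof. by case=> f [_ inj im _]; rewrite -im card_in_imset. Qed.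

Lemma glue (T1 T2 : rtr) v1 v2 (s : 'I_(tn T1) -> 'I_(tn T2)) :
  (forall w, w \in CC T1 v1 -> s w \in CC T2 v2) -> {in CC T1 v1 &, injective s} ->
  (forall y, y \in CC T2 v2 -> exists2 x, x \in CC T1 v1 & s x = y) ->
  (forall w, w \in CC T1 v1 -> Iso T1 T2 w (s w)) -> Iso T1 T2 v1 v2.
Proof.
move=> sC sI sS sIso.
have H : forall w, exists f : 'I_(tn T1) -> 'I_(tn T2), w \in CC T1 v1 -> isoP w (s w) f.
  move=> w; case: (boolP (w \in CC T1 v1)) => wc.
    by have [f Hf] := sIso w wc; exists f.
  by exists (fun=> v2).
have [F HF] := fin_all_exists H.
have H1r := tHr T1; have H1c := tHreach T1; have H2r := tHr T2; have H2c := tHreach T2.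
pose g u := if u == v1 then v2 else
  if [pick w in CC T1 v1 | u \in DD T1 w] is Some w then F w u else v2.
have sub1 w u : w \in CC T1 v1 -> u \in DD T1 w -> u \in DD T1 v1 :\ v1.
  exact: ch_desc_sub.
have sub2 w y : w \in CC T2 v2 -> y \in DD T2 w -> y \in DD T2 v2 :\ v2.
  exact: ch_desc_sub.
have gE w u : w \in CC T1 v1 -> u \in DD T1 w -> g u = F w u.
  move=> wc uw; rewrite /g.
  have /setD1P[uv _] := sub1 _ _ wc uw; rewrite (negbTE uv).
  case: pickP => [w' /andP[w'c uw']|]; last by move=> /(_ w); rewrite wc uw.
  by rewrite (ch_disj H1r H1c w'c wc uw' uw).
have Fin w u : w \in CC T1 v1 -> u \in DD T1 w -> F w u \in DD T2 (s w).
  by move=> wc uw; have [_ _ <- _] := HF w wc; apply: imset_f.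
have split1 u : u \in DD T1 v1 -> u != v1 -> exists2 w, w \in CC T1 v1 & u \in DD T1 w.
  exact: desc_split.
exists g; split.
- by rewrite /g eqxx.
- move=> u1 u2 u1D u2D.
  case: (eqVneq u1 v1) => [->|u1v]; case: (eqVneq u2 v1) => [->|u2v] //.
  + have [w wc uw] := split1 u2 u2D u2v; rewrite (gE w u2 wc uw) {1}/g eqxx => E.
    have := sub2 _ _ (sC w wc) (Fin w u2 wc uw); rewrite -E in_setD1 eqxx //.
  + have [w wc uw] := split1 u1 u1D u1v; rewrite (gE w u1 wc uw) [g v1]/g eqxx => E.
    have := sub2 _ _ (sC w wc) (Fin w u1 wc uw); rewrite E in_setD1 eqxx //.
  + have [w1 wc1 uw1] := split1 u1 u1D u1v; have [w2 wc2 uw2] := split1 u2 u2D u2v.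
    rewrite (gE w1 u1 wc1 uw1) (gE w2 u2 wc2 uw2) => E.
    have ew : w1 = w2.
      apply: sI => //; apply: (ch_disj H2r H2c (sC w1 wc1) (sC w2 wc2) (Fin w1 u1 wc1 uw1)).
      by rewrite E; apply: Fin.
    subst w2; have [_ inj _ _] := HF w1 wc1; exact: inj.
- apply/setP => y; apply/imsetP/idP.
    move=> [u uD ->]; case: (eqVneq u v1) => [->|uv]; first by rewrite /g eqxx desc_refl.
    have [w wc uw] := split1 u uD uv; rewrite (gE w u wc uw).
    by have /setD1P[] := sub2 _ _ (sC w wc) (Fin w u wc uw).
  move=> yD; case: (eqVneq y v2) => [->|yv].
    by exists v1; [exact: desc_refl | rewrite /g eqxx].
  have [w2 wc2 yw2] := desc_split H2r yD yv.
  have [w wc sw] := sS w2 wc2; subst w2.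
  have [_ _ im _] := HF w wc; move: yw2; rewrite -im => /imsetP[u uw ->].
  exists u; last by rewrite (gE w u wc uw).
  by have /setD1P[] := sub1 _ _ wc uw.
- move=> u uD uv; have [w wc uw] := split1 u uD uv.
  case: (eqVneq u w) => [E|uw'].
    subst u; rewrite (ch_par wc) (gE w w wc uw) {1}/g eqxx.
    have [-> _ _ _] := HF w wc; by rewrite (ch_par (sC w wc)).
  have pw := desc_par uw uw'.
  rewrite (gE w _ wc pw) (gE w u wc uw).
  by have [_ _ _ ->] := HF w wc.
Qed.

Lemma claim s : forall (T1 T2 : rtr) v1 v2 m,
  (#|DD T1 v1| + #|DD T2 v2| <= s)%N -> (s <= m)%N ->
  WW T1 m v1 * PP T2 m v2 = WW T2 m v2 * PP T1 m v1 -> Iso T1 T2 v1 v2.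
Proof.
elim: s => [|s IH] T1 T2 v1 v2 m Hs Hm Heq.
  have : (0 < #|DD T1 v1|)%N by apply/card_gt0P; exists v1; exact: desc_refl.
  by move: Hs; rewrite leqn0 addn_eq0 => /andP[/eqP -> _].
case: m Hm Heq => [//|k] Hm Heq.
have d1p : (0 < #|DD T1 v1|)%N by apply/card_gt0P; exists v1; exact: desc_refl.
have d2p : (0 < #|DD T2 v2|)%N by apply/card_gt0P; exists v2; exact: desc_refl.
have ltc (T : rtr) w v : w \in CC T v -> (#|DD T w| < #|DD T v|)%N.
  move=> wc; exact: (card_ch_lt (tHr T) (tHreach T) wc).
have d1k : (#|DD T1 v1| <= k)%N by lia.
have d2k : (#|DD T2 v2| <= k)%N by lia.
have Pnz (T : rtr) v : (#|DD T v| <= k.+1)%N -> PP T k v != 0.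
  move=> Hv; exact: (P_neq0 (tHr T) (tHreach T) Hv).
have Pv1 : PP T1 k v1 != 0 by apply: Pnz; lia.
have Pv2 : PP T2 k v2 != 0 by apply: Pnz; lia.
have Pw (T : rtr) v w : (#|DD T v| <= k)%N -> w \in CC T v -> PP T k w != 0.
  by move=> Hv wc; apply: Pnz; have := ltc T _ _ wc; lia.
pose r1 x := - (WW T1 k x / PP T1 k x).
pose r2 x := - (WW T2 k x / PP T2 k x).
have PPlin (T : rtr) v : PP T k.+1 v =
    tofrac (\prod_(w in CC T v) lin (WW T k w) (PP T k w)).
  rewrite (P_prod (tHr T) (tHreach T)) rmorph_prod; apply: eq_bigr => w _.
  exact: (W_lin (tHr T) (tHreach T)).
rewrite (W_lin (tHr T1) (tHreach T1)) (W_lin (tHr T2) (tHreach T2)) !PPlin -!rmorphM in Heq; move/eqP: Heq; rewrite tofrac_eq => /eqP Heq.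
have pe : perm_eq (r1 v1 :: map r2 (enum (CC T2 v2))) (r2 v2 :: map r1 (enum (CC T1 v1))).
  have := @lin_perm _ ((WW T1 k v1, PP T1 k v1) :: map (fun w => (WW T2 k w, PP T2 k w)) (enum (CC T2 v2)))
     ((WW T2 k v2, PP T2 k v2) :: map (fun w => (WW T1 k w, PP T1 k w)) (enum (CC T1 v1))).
  rewrite /= -!map_comp; apply.
  - by rewrite Pv1 /= all_map; apply/allP => w; rewrite mem_enum => wc /=; exact: (Pw _ v2 _ d2k wc).
  - by rewrite Pv2 /= all_map; apply/allP => w; rewrite mem_enum => wc /=; exact: (Pw _ v1 _ d1k wc).
  - by rewrite !big_cons !big_map !big_enum.
case: (perm_cons_case pe) => [[E pe']|[x1 x2]].
  have pe'' : perm_eq (map r1 (enum (CC T1 v1))) (map r2 (enum (CC T2 v2))) by rewrite perm_sym.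
  have [h [h1 h2 h3 h4]] := match_perm v2 (@enum_uniq _ (CC T1 v1)) (@enum_uniq _ (CC T2 v2))
      pe''.
  apply: (glue (s := h)).
  - by move=> w wc; rewrite -mem_enum; apply: h1; rewrite mem_enum.
  - by move=> x y xc yc; apply: h3; rewrite mem_enum.
  - by move=> y; rewrite -mem_enum => /h4 [x]; rewrite mem_enum => xc <-; exists x.
  move=> w wc; have wc' : w \in enum (CC T1 v1) by rewrite mem_enum.
  have hc : h w \in CC T2 v2 by rewrite -mem_enum; apply: h1.
  apply: (IH _ _ _ _ k).
  - by have := ltc _ _ _ wc; have := ltc _ _ _ hc; lia.
  - lia.
  - apply: ratio_eq; [exact: (Pw _ v1 _ d1k wc) | exact: (Pw _ v2 _ d2k hc) | exact: h2].
case/mapP: x1 => w1; rewrite mem_enum => w1c E1.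
case/mapP: x2 => w2; rewrite mem_enum => w2c E2.
case: (leqP #|DD T1 v1| #|DD T2 v2|) => dle.
  have : Iso T1 T1 v1 w1.
    apply: (IH _ _ _ _ k); first by have := ltc _ _ _ w1c; lia.
      lia.
    by apply: ratio_eq; [exact: Pv1 | exact: (Pw _ v1 _ d1k w1c) | exact: E1].
  by move/Iso_card => E; have := ltc _ _ _ w1c; rewrite E ltnn.
have : Iso T2 T2 v2 w2.
  apply: (IH _ _ _ _ k); first by have := ltc _ _ _ w2c; lia.
    lia.
  by apply: ratio_eq; [exact: Pv2 | exact: (Pw _ v2 _ d2k w2c) | exact: E2].
by move/Iso_card => E; have := ltc _ _ _ w2c; rewrite E ltnn.
Qed.

Set Implicit Arguments. Unset Strict Implicit. Unset Printing Implicit Defensive.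
Import GRing.Theory.
Local Open Scope ring_scope.


Local Close Scope ring_scope.
Lemma L1 k (x : 'I_k.+2) : x != ord0 -> (inord (k.+1 - (inord (k.+1 - x) : 'I_k.+1)) : 'I_k.+2) = x.
Proof.
rewrite -val_eqE /= -lt0n => x0; apply: val_inj => /=; have := ltn_ord x => kk.
have h1 : (inord (k.+1 - x) : 'I_k.+1) = k.+1 - x :> nat by rewrite inordK; lia.
rewrite h1 inordK; lia.
Qed.
Lemma L2 k (x : 'I_k.+1) : (inord (k.+1 - (inord (k.+1 - x) : 'I_k.+2)) : 'I_k.+1) = x.
Proof.
apply: val_inj => /=; have := ltn_ord x => kk.
have h1 : (inord (k.+1 - x) : 'I_k.+2) = k.+1 - x :> nat by rewrite inordK; lia.
rewrite h1 inordK; lia.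
Qed.
Lemma L3 k (x y : 'I_k.+1) :
  ((inord (k.+1 - x) : 'I_k.+2) < (inord (k.+1 - y) : 'I_k.+2))%N = (y < x)%N.
Proof.
have := ltn_ord x; have := ltn_ord y => hx hy.
rewrite inordK; last lia.
rewrite inordK; last lia.
apply/idP/idP; lia.
Qed.
Lemma L4 k (x : 'I_k.+1) : (inord (k.+1 - x) : 'I_k.+2) != ord0.
Proof. rewrite -val_eqE /=; have := ltn_ord x => hx; rewrite inordK; lia. Qed.

Local Open Scope ring_scope.
Section Bridge.
Variables (n : nat) (r : 'I_n) (par : 'I_n -> 'I_n).
Hypothesis Hr : par r = r.
Hypothesis Hreach : forall v, fconnect par v r.

Local Notation e := (tree_edge r par).

Lemma card_edges : #|[set uv : 'I_n * 'I_n | e uv.1 uv.2]| = n.-1.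
Proof.
have -> : [set uv : 'I_n * 'I_n | e uv.1 uv.2] = [set (par v, v) | v in [set~ r]].
  apply/setP => [[u v]]; rewrite inE /tree_edge /=; apply/andP/imsetP.
    by move=> [vr /eqP <-]; exists v; rewrite ?inE.
  by move=> [w wr [-> ->]]; rewrite in_setC1 in wr; rewrite wr eqxx.
rewrite card_imset; last by move=> x y [].
by rewrite cardsC1 card_ord.
Qed.

Lemma strict_iff k (kap : {ffun 'I_n -> 'I_k}) :
  (proper_col e kap && (asc e kap == n.-1)) =
  [forall u, (u != r) ==> (kap (par u) < kap u)%N].
Proof.
set E := [set uv : 'I_n * 'I_n | e uv.1 uv.2].
have AsubE : [set uv : 'I_n * 'I_n | e uv.1 uv.2 && (kap uv.1 < kap uv.2)%N] \subset E.
  by apply/subsetP => uv; rewrite !inE => /andP[].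
apply/idP/idP.
  move=> /andP[_ /eqP H].
  have AE : [set uv : 'I_n * 'I_n | e uv.1 uv.2 && (kap uv.1 < kap uv.2)%N] = E.
    apply/eqP; rewrite eqEcard AsubE /= card_edges -H /asc leqnn //.
  apply/forallP => u; apply/implyP => ur.
  have : (par u, u) \in E by rewrite inE /tree_edge /= ur eqxx.
  by rewrite -AE inE => /andP[].
move=> /forallP H.
have He u v : e u v -> (kap u < kap v)%N.
  by rewrite /tree_edge => /andP[vr /eqP <-]; exact: (implyP (H v) vr).
apply/andP; split.
  apply/forallP => u; apply/forallP => v; apply/implyP => euv.
  by apply/eqP => E'; move: (He _ _ euv); rewrite E' ltnn.
apply/eqP; rewrite /asc -card_edges; apply: eq_card => uv; rewrite !inE.
by apply/andP/idP => [[]//|h]; split=> //; exact: He.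
Qed.


Definition Xa k (al : {ffun 'I_k.+1 -> 'I_n.+1}) : FT k.+1 :=
  \prod_(c : 'I_k.+1) Xv (inord (k.+1 - c)%N : 'I_k.+2) ^+ al c.

Lemma bridge k : W r par k.+1 r =
  \sum_(al : {ffun 'I_k.+1 -> 'I_n.+1})
     (csf_coeff e (fun c => nat_of_ord (al c)) n.-1)%:R * Xa al.
Proof.
have Dr : desc par r = setT by apply/setP => u; rewrite (desc_r Hreach) inE.
rewrite /W Dr /Phi.
pose h (kap : {ffun 'I_n -> 'I_k.+1}) : {ffun 'I_n -> 'I_k.+2} :=
  [ffun u => inord (k.+1 - kap u)%N].
pose h' (ka : {ffun 'I_n -> 'I_k.+2}) : {ffun 'I_n -> 'I_k.+1} :=
  [ffun u => inord (k.+1 - ka u)%N].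
rewrite (reindex_onto h h'); last first.
  move=> ka /goodP[H1 _]; apply/ffunP => u; rewrite !ffunE L1 //.
  by rewrite H1 inE.
have hh kap : h' (h kap) = kap.
  by apply/ffunP => u; rewrite !ffunE L2.
rewrite (eq_bigl (fun kap : {ffun 'I_n -> 'I_k.+1} => [forall u, (u != r) ==> (kap (par u) < kap u)%N])); last first.
  move=> kap; rewrite hh eqxx andbT; apply/goodP/forallP.
    move=> [_ H2] u; apply/implyP => ur; have := H2 u (in_setT u) ur (in_setT _).
    by rewrite !ffunE L3.
  move=> H; split.
    by move=> u; rewrite ffunE inE L4.
  by move=> u _ ur _; rewrite !ffunE L3; exact: (implyP (H u) ur).
pose cont (kap : {ffun 'I_n -> 'I_k.+1}) : {ffun 'I_k.+1 -> 'I_n.+1} :=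
  [ffun c => inord #|[set u | kap u == c]|].
have ccard (kap : {ffun 'I_n -> 'I_k.+1}) c : (#|[set u | kap u == c]| < n.+1)%N.
  by rewrite ltnS; apply: leq_trans (max_card _) _; rewrite card_ord.
rewrite (partition_big cont xpredT) //=.
apply: eq_bigr => al _.
rewrite (eq_bigr (fun _ => Xa al)); last first.
  move=> kap /andP[_ /eqP <-]; rewrite /mono /Xa.
  rewrite (partition_big kap xpredT) //=; apply: eq_bigr => c _.
  rewrite (eq_bigr (fun _ => Xv (inord (k.+1 - c)%N : 'I_k.+2))); last first.
    by move=> u /eqP <-; rewrite ffunE.
  rewrite prodr_const ffunE (inordK (ccard kap c)).
  by congr (_ ^+ _); apply: eq_card => u; rewrite inE.
rewrite sumr_const mulr_natl; congr (_ *+ _).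
rewrite /csf_coeff cardsE; apply: eq_card => kap; rewrite /in_mem /=.
have -> : (cont kap == al) = [forall c, #|[set v | kap v == c]| == al c].
  apply/eqP/forallP => [<- c|H].
    by rewrite ffunE (inordK (ccard kap c)).
  apply/ffunP => c; rewrite ffunE; apply: val_inj; rewrite /= (inordK (ccard kap c)).
  exact/eqP/H.
by rewrite -strict_iff; case: (proper_col e kap) => //=; rewrite andbC.
Qed.

End Bridge.

Lemma lin_inj (F : fieldType) (a b a' b' : F) : lin a b = lin a' b' -> a = a' /\ b = b'.
Proof.
move=> E; split.
  by have := congr1 (fun p : {poly F} => p`_0) E; rewrite /lin !coefD !coefC !coefXM /= !addr0.
have := congr1 (fun p : {poly F} => p`_1) E.
by rewrite /lin !coefD !coefC !coefXM /= !coefC /= !add0r.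
Qed.

Local Close Scope ring_scope.

Lemma fiber_sum (n m : nat) (kap : {ffun 'I_m -> 'I_n}) :
  \sum_(c : 'I_n) #|[set v | kap v == c]| = m.
Proof.
rewrite -[RHS]card_ord -sum1_card (partition_big kap xpredT) //=.
apply: eq_bigr => c _; rewrite -sum1_card; apply: eq_bigl => v; by rewrite inE.
Qed.

Theorem proposition8p2 (n m : nat) (r : 'I_n) (par : 'I_n -> 'I_n)
    (r' : 'I_m) (par' : 'I_m -> 'I_m) :
  rooted_tree r par -> rooted_tree r' par' ->
  csf_eq (tree_edge r par) (tree_edge r' par') ->
  rooted_iso r par r' par'.
Proof.
move=> [Hr Hex] [Hr' Hex'] Hcsf.
have Hreach : forall v, fconnect par v r.
  by move=> v; have [k <-] := Hex v; exact: fconnect_iter.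
have Hreach' : forall v, fconnect par' v r'.
  by move=> v; have [k <-] := Hex' v; exact: fconnect_iter.
have Enm : n = m.
  pose kap0 : {ffun 'I_n -> 'I_n} := [ffun u => u].
  have := Hcsf n (fun _ => 1) (asc (tree_edge r par) kap0); rewrite /csf_coeff.
  have : 0 < #|[set kap : {ffun 'I_n -> 'I_n} | [&& proper_col (tree_edge r par) kap,
       [forall c, #|[set v | kap v == c]| == 1] & asc (tree_edge r par) kap == asc (tree_edge r par) kap0]]|.
    apply/card_gt0P; exists kap0; rewrite inE eqxx andbT; apply/andP; split.
      apply/forallP => u; apply/forallP => v; apply/implyP; rewrite /tree_edge => /andP[vr /eqP pv].
      rewrite !ffunE; apply/eqP => uv; subst u.
      have /fconnectP [k Hk] := Hreach v.
      by move: vr; rewrite -Hk iter_fix // eqxx.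
    apply/forallP => c; apply/eqP; rewrite -(cards1 c); apply: eq_card => v.
    by rewrite !inE ffunE.
  move=> H1 H2; move: H1; rewrite H2 => /card_gt0P [kap]; rewrite inE => /and3P[_ /forallP Hc _].
  rewrite -(fiber_sum kap) -[LHS]card_ord -sum1_card; apply: eq_bigr => c _.
  by apply/esym/eqP/Hc.
subst m.
set k := n + n.
have HW : W r par k.+1 r = W r' par' k.+1 r'.
  rewrite (bridge Hreach) (bridge Hreach'); apply: eq_bigr => al _; by rewrite Hcsf.
rewrite (W_lin Hr Hreach) (W_lin Hr' Hreach') in HW.
move/eqP: HW; rewrite tofrac_eq => /eqP /lin_inj [Ew Ep].
have cardD (q : 'I_n -> 'I_n) (s : 'I_n) (Hq : forall v, fconnect q v s) : #|desc q s| = n.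
  rewrite -[RHS]card_ord; apply: eq_card => v; by rewrite inE Hq.
have : Iso (RT Hr Hreach) (RT Hr' Hreach') r r'.
  apply: (@claim k (RT Hr Hreach) (RT Hr' Hreach') r r' k) => //=.
    by rewrite (cardD _ _ Hreach) (cardD _ _ Hreach').
  by rewrite Ew Ep.
case=> f [fr finj fim fedge] /=.
have inD (v : 'I_n) : v \in desc par r by rewrite inE Hreach.
have fi : injective f by move=> x y; apply: finj; apply: inD.
exists f; split; [exact: injF_bij | exact: fr |].
move=> u v; rewrite /tree_edge.
case: (eqVneq v r) => [->|vr]; first by rewrite fr eqxx.
have -> : (f v != r') by apply/eqP => E; move/eqP: vr; apply; apply: fi; rewrite E fr.
have /= E := fedge v (inD v) vr.
by rewrite /= -E (inj_eq fi).
Qed.
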